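(* For $n\in\mathbb{N}$ let $X_n=(\sum_{i=1}^{2n}\oplus\ell_2)_{\ell_1}$ and $Y_n=(\sum_{i=1}^{2n}\oplus\ell_2)_{\ell_\infty}$, and let $\mathcal{X}=(\sum_{n}\oplus(X_n\oplus Y_n))_{\ell_2}$, i.e. the space of $x=\sum_n(x_n+y_n)$ with $x_n=(x_{n(1)},\ldots,x_{n(2n)})\in X_n$, $y_n=(y_{n(1)},\ldots,y_{n(2n)})\in Y_n$, normed by $\|x\|^2=\sum_n\big((\sum_{j=1}^{2n}\|x_{n(j)}\|)^2+(\max_{1\le j\le 2n}\|y_{n(j)}\|)^2\big)$. Then $\mathcal{X}$ fails the UALS property.
   Context: A Banach space $X$ satisfies the UALS property if there exists $C>0$ such that for every convex norm-compact $W\subset\mathcal{L}(X)$, every $A\in\mathcal{L}(X)$ and $\varepsilon>0$ such that for every $x$ in the unit ball of $X$ there is $B\in W$ with $\|A(x)-B(x)\|\le\varepsilon$, there exist a closed finite-codimensional subspace $Y$ of $X$ and $B\in W$ with $\|(A-B)|_Y\|_{\mathcal{L}(Y,X)}\le C\varepsilon$. *)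

(* Defs.v *)
From HB Require Import structures.
From mathcomp Require Import all_boot all_order all_algebra.
From mathcomp Require Import all_classical all_reals all_analysis.
From Stdlib Require List.
Set Implicit Arguments. Unset Strict Implicit. Unset Printing Implicit Defensive.
Import Order.TTheory GRing.Theory Num.Theory.
Local Open Scope classical_set_scope.
Local Open Scope ring_scope.

(* Generic notions for a normed space given as a linear subspace S of an     *)
(* ambient vector space V with norm nrm (only its values on S matter).       *)
Section Generic.
Variables (R : realType) (V : lmodType R) (S : set V) (nrm : V -> R).

(* L(S): bounded linear operators S -> S.  An operator is represented by a
   function V -> V, normalised to vanish outside S, so that elements of L(S)
   are in bijection with such functions. *)
Definition bounded_op (A : V -> V) : Prop :=
  [/\ (forall x, S x -> S (A x)),
      (forall (a : R) x y, S x -> S y -> A (a *: x + y) = a *: A x + A y),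
      (exists M : R, forall x, S x -> nrm (A x) <= M * nrm x) &
      (forall x, ~ S x -> A x = 0)].

Definition opdist (A B : V -> V) : R :=
  sup [set nrm (A x - B x) | x in [set x | S x /\ nrm x <= 1]].

Definition op_open (U : set (V -> V)) : Prop :=
  forall A, bounded_op A -> U A ->
    exists2 r : R, 0 < r & forall B, bounded_op B -> opdist A B < r -> U B.

Definition op_compact (W : set (V -> V)) : Prop :=
  W `<=` bounded_op /\
  forall (I : Type) (U : I -> set (V -> V)),
    (forall i, op_open (U i)) ->
    (forall A, W A -> exists i, U i A) ->
    exists F : seq I, forall A, W A -> exists2 i, List.In i F & U i A.

Definition op_convex (W : set (V -> V)) : Prop :=
  forall A B (t : R), W A -> W B -> 0 <= t <= 1 ->
    W (fun x => t *: A x + (1 - t) *: B x).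

Definition closed_fincodim_subspace (Y : set V) : Prop :=
  [/\ Y `<=` S, Y 0,
      (forall (a : R) x y, Y x -> Y y -> Y (a *: x + y)),
      (forall x, S x -> (forall e : R, 0 < e -> exists2 y, Y y & nrm (x - y) < e) -> Y x) &
      (exists (m : nat) (v : 'I_m -> V), (forall i, S (v i)) /\
         forall x, S x -> exists y (c : 'I_m -> R),
           Y y /\ x = y + \sum_(i < m) c i *: v i)].

Definition UALS : Prop :=
  exists C : R, 0 < C /\
    forall W : set (V -> V), op_convex W -> op_compact W ->
    forall A, bounded_op A ->
    forall eps : R, 0 < eps ->
      (forall x, S x -> nrm x <= 1 -> exists2 B, W B & nrm (A x - B x) <= eps) ->
      exists Y B, [/\ closed_fincodim_subspace Y, W B &
        forall y, Y y -> nrm y <= 1 -> nrm (A y - B y) <= C * eps].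

End Generic.

(* A vector is v : nat -> bool -> nat -> nat -> R, where v n false j is the   *)
(* l_2-component x_{n(j+1)} of x_n in X_n, v n true j is y_{n(j+1)} in Y_n,  *)
(* (j < 2n), and the last nat indexes the coordinates in l_2.               *)
Section Concrete.
Variable R : realType.

Definition Ecar := nat -> bool -> nat -> nat -> R^o.
HB.instance Definition _ := GRing.Lmodule.on Ecar.

Definition l2sq (u : nat -> R) : \bar R :=
  (\sum_(0 <= k <oo) ((u k) ^+ 2)%:E)%E.

Definition cnorm (v : Ecar) (n : nat) (b : bool) (j : nat) : R :=
  Num.sqrt (fine (l2sq (v n b j))).

Definition Xterm (v : Ecar) (n : nat) : R :=
  (\sum_(j < 2 * n) cnorm v n false j) ^+ 2 +
  (\big[Num.max/0]_(j < 2 * n) cnorm v n true j) ^+ 2.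

Definition Xspace : set Ecar :=
  [set v | [/\ (forall n b j k, (2 * n <= j)%N -> v n b j k = 0),
               (forall n b j, (l2sq (v n b j) < +oo)%E) &
               ((\sum_(0 <= n <oo) (Xterm v n)%:E) < +oo)%E]].

Definition Xnorm (v : Ecar) : R :=
  Num.sqrt (fine (\sum_(0 <= n <oo) (Xterm v n)%:E)%E).

End Concrete.

(* Main.v *)
Require Import Defs.
From HB Require Import structures.
From mathcomp Require Import all_boot all_order all_algebra.
From mathcomp Require Import all_classical all_reals all_analysis.
From mathcomp Require Import ring lra.
Set Implicit Arguments. Unset Strict Implicit. Unset Printing Implicit Defensive.
Import Order.TTheory GRing.Theory Num.Theory.
Import numFieldNormedType.Exports.
Local Open Scope classical_set_scope.
Local Open Scope ring_scope.

Section Lemmas.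
Variable R : realType.

Definition cn (u : nat -> R) : R := Num.sqrt (fine (l2sq u)).

Lemma cnorm_cn (v : Ecar R) n b j : cnorm v n b j = cn (v n b j).
Proof. by []. Qed.

Lemma l2sq_ge0 (u : nat -> R) : (0 <= l2sq u)%E.
Proof. by apply: nneseries_ge0 => k _ _; rewrite lee_fin sqr_ge0. Qed.

Lemma cn_ge0 (u : nat -> R) : 0 <= cn u.
Proof. exact: sqrtr_ge0. Qed.

Lemma eseries_single (f : nat -> \bar R) n :
  (forall k, k != n -> f k = 0%E) -> (0 <= f n)%E ->
  (\sum_(0 <= k <oo) f k)%E = f n.
Proof.
move=> f0 fn0.
rewrite (@nneseriesD1 _ f n xpredT) //; last first.
  by move=> k _; case: (eqVneq k n) => [->//|/f0 ->].
rewrite eseries0 ?adde0 // => i _ /= /f0 //.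
Qed.

Lemma eseries_term_le (f : nat -> \bar R) n :
  (forall k, (0 <= f k)%E) -> (f n <= \sum_(0 <= k <oo) f k)%E.
Proof.
move=> f0; rewrite (@nneseriesD1 _ f n xpredT) //.
by rewrite leeDl // nneseries_ge0.
Qed.

Lemma l2sq_fin (u : nat -> R) m : (forall k, (m <= k)%N -> u k = 0) ->
  l2sq u = (\sum_(k < m) u k ^+ 2)%:E.
Proof.
move=> u0; rewrite /l2sq (@nneseries_split _ _ 0 m); last by move=> k _; rewrite lee_fin sqr_ge0.
rewrite eseries0 ?adde0; last by move=> i /= mi _; rewrite u0 // expr0n.
by rewrite add0n sumEFin big_mkord.
Qed.

Lemma l2sq0 : l2sq (fun _ => 0 : R) = 0%E.
Proof. by rewrite (@l2sq_fin _ 0) // big_ord0. Qed.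

Lemma cn0 : cn (fun _ => 0) = 0.
Proof. by rewrite /cn l2sq0 /= sqrtr0. Qed.

Lemma l2sqZ (c : R) (u : nat -> R) : l2sq (fun k => c * u k) = ((c ^+ 2)%:E * l2sq u)%E.
Proof.
rewrite /l2sq -nneseriesZl; last by move=> k _; rewrite lee_fin sqr_ge0.
by apply: eq_eseriesr => k _; rewrite exprMn EFinM.
Qed.

Lemma cnZ (c : R) (u : nat -> R) : cn (fun k => c * u k) = `|c| * cn u.
Proof.
rewrite /cn l2sqZ.
have := l2sq_ge0 u; case: (l2sq u) => [r| |] //= r0.
  by rewrite sqrtrM ?sqr_ge0 // sqrtr_sqr.
have [->|c0] := eqVneq c 0.
  by rewrite (_ : (0 ^+ 2)%:E = 0%E) ?mul0e ?sqrtr0 ?normr0 ?mul0r // expr0n.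
rewrite gt0_muley; last by rewrite lte_fin lt_def sqr_ge0 sqrf_eq0 c0.
by rewrite /= sqrtr0 mulr0.
Qed.


Lemma Xterm_ge0 (v : Ecar R) n : 0 <= Xterm v n.
Proof. by rewrite /Xterm addr_ge0 // sqr_ge0. Qed.

Lemma bigmax_ge0 (I : finType) (F : I -> R) :
  (forall i, 0 <= F i) -> 0 <= \big[Num.max/0]_(i : I) F i.
Proof.
move=> F0; elim/big_ind: _ => // x y x0 y0.
by rewrite le_max x0.
Qed.

Lemma bigmax0 (I : finType) (F : I -> R) :
  (forall i, F i = 0) -> \big[Num.max/0]_(i : I) F i = 0.
Proof.
move=> F0; elim/big_ind: _ => //.
- by move=> x y -> ->; rewrite maxxx.
all: try (move=> i _; exact: F0).
Qed.

Lemma Xnorm_block (w : Ecar R) n0 :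
  (forall n b j k, n != n0 -> w n b j k = 0) -> Xnorm w = Num.sqrt (Xterm w n0).
Proof.
move=> w0; rewrite /Xnorm (@eseries_single _ n0) //; last by rewrite lee_fin Xterm_ge0.
move=> n nn0; rewrite /Xterm.
have cz : forall b j, cnorm w n b j = 0.
  move=> b j; rewrite cnorm_cn -cn0; congr cn; apply/funext => k; exact: w0.
rewrite big1; last by move=> j _; rewrite cz.
rewrite bigmax0; last by move=> j; rewrite cz.
by rewrite expr0n /= add0r.
Qed.

Lemma Xspace_sum_fin (v : Ecar R) : Xspace v ->
  (\sum_(0 <= n <oo) (Xterm v n)%:E)%E \is a fin_num.
Proof.
case=> _ _ h; rewrite fin_num_abs gee0_abs //.
by apply: nneseries_ge0 => n _ _; rewrite lee_fin Xterm_ge0.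
Qed.

Lemma Xterm_le_Xnorm (v : Ecar R) n : Xspace v -> Num.sqrt (Xterm v n) <= Xnorm v.
Proof.
move=> Sv; rewrite /Xnorm ler_sqrt; last first.
  by rewrite fine_ge0 //; apply: nneseries_ge0 => m _ _; rewrite lee_fin Xterm_ge0.
rewrite -lee_fin fineK ?Xspace_sum_fin //.
by apply: eseries_term_le => m; rewrite lee_fin Xterm_ge0.
Qed.

Lemma sumc_le (v : Ecar R) n : Xspace v ->
  \sum_(j < 2 * n) cnorm v n false j <= Xnorm v.
Proof.
move=> Sv; apply: le_trans (Xterm_le_Xnorm n Sv).
have s0 : 0 <= \sum_(j < 2 * n) cnorm v n false j by apply: sumr_ge0 => j _; exact: cn_ge0.
rewrite -(ger0_norm s0) -sqrtr_sqr ler_sqrt ?Xterm_ge0 //.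
by rewrite /Xterm lerDl sqr_ge0.
Qed.

Definition Bf (n0 : nat) (mu : nat -> R) (v : Ecar R) : Ecar R :=
  if `[< Xspace v >] then
    (fun n b j k => if [&& n == n0, b & (j < 2 * n0)%N] then mu j * v n0 false j k else 0)
  else 0.

Lemma Bf_in n0 mu v : Xspace v -> Bf n0 mu v =
  (fun n b j k => if [&& n == n0, b & (j < 2 * n0)%N] then mu j * v n0 false j k else 0).
Proof. by move=> Sv; rewrite /Bf asboolT. Qed.

Lemma Bf_out n0 mu v : ~ Xspace v -> Bf n0 mu v = 0.
Proof. by move=> Sv; rewrite /Bf asboolF. Qed.

Lemma XnormBf n0 mu (v : Ecar R) : Xspace v ->
  Xnorm (Bf n0 mu v) = \big[Num.max/0]_(j < 2 * n0) (`|mu j| * cnorm v n0 false j).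
Proof.
move=> Sv; rewrite Bf_in // (@Xnorm_block _ n0); last first.
  by move=> n b j k /negbTE ->.
rewrite /Xterm big1; last first.
  move=> j _; rewrite cnorm_cn; apply: (etrans _ cn0); congr cn.
  by apply/funext => k /=; rewrite andbF.
rewrite expr0n /= add0r sqrtr_sqr ger0_norm; last first.
  by apply: bigmax_ge0 => j; exact: cn_ge0.
apply: eq_bigr => j _; rewrite cnorm_cn -cnZ; congr cn.
by apply/funext => k /=; rewrite eqxx ltn_ord.
Qed.


Lemma Ecar_lin (a : R) (x y : Ecar R) n b j k :
  (a *: x + y) n b j k = a * x n b j k + y n b j k.
Proof. by []. Qed.

Lemma Ecar_sub (x y : Ecar R) n b j k :
  (x - y) n b j k = x n b j k - y n b j k.
Proof. by []. Qed.

Lemma l2sq_lin_le (a : R) (u w : nat -> R) :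
  (l2sq (fun k => (a * u k + w k)%R) <= (2 * a ^+ 2)%R%:E * l2sq u + 2%:E * l2sq w)%E.
Proof.
rewrite /l2sq -!nneseriesZl; try by move=> k _; rewrite lee_fin sqr_ge0.
rewrite -nneseriesD; last first.
- by move=> k _ _; rewrite -EFinM lee_fin mulr_ge0 ?sqr_ge0.
- by move=> k _ _; rewrite -EFinM lee_fin; apply: mulr_ge0; [apply: mulr_ge0|]; rewrite ?sqr_ge0.
apply: lee_nneseries; first by move=> k _ _; rewrite lee_fin sqr_ge0.
move=> k _; rewrite -!EFinM -EFinD lee_fin.
rewrite -subr_ge0 (_ : _ - _ = (a * u k - w k) ^+ 2) ?sqr_ge0 //; ring.
Qed.

Lemma cn_lin_le (a : R) (u w : nat -> R) :
  (l2sq u < +oo)%E -> (l2sq w < +oo)%E ->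
  cn (fun k => a * u k + w k) <= 2 * `|a| * cn u + 2 * cn w.
Proof.
move=> fu fw.
have fu' : l2sq u \is a fin_num by rewrite fin_num_abs gee0_abs ?l2sq_ge0.
have fw' : l2sq w \is a fin_num by rewrite fin_num_abs gee0_abs ?l2sq_ge0.
have h0 : 0 <= 2 * `|a| * cn u + 2 * cn w.
  by rewrite addr_ge0 ?mulr_ge0 ?cn_ge0.
rewrite -(ger0_norm h0) -sqrtr_sqr /cn ler_sqrt ?sqr_ge0 //.
have L := l2sq_lin_le a u w.
have fz : l2sq (fun k => a * u k + w k) \is a fin_num.
  rewrite fin_num_abs gee0_abs ?l2sq_ge0 //; apply: le_lt_trans L _.
  by rewrite -(fineK fu') -(fineK fw') -!EFinM -EFinD ltry.
apply: (@le_trans _ _ (2 * a ^+ 2 * fine (l2sq u) + 2 * fine (l2sq w))).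
  by rewrite -lee_fin fineK // EFinD !EFinM !fineK.
have e1 := sqr_sqrtr (fine_ge0 (l2sq_ge0 u)).
have e2 := sqr_sqrtr (fine_ge0 (l2sq_ge0 w)).
set p := Num.sqrt (fine (l2sq u)) in e1 *.
set q := Num.sqrt (fine (l2sq w)) in e2 *.
rewrite -e1 -e2 -(real_normK (num_real a)).
have p0 : 0 <= p := sqrtr_ge0 _.
have q0 : 0 <= q := sqrtr_ge0 _.
have a0 : 0 <= `|a| := normr_ge0 a.
rewrite -subr_ge0.
have -> : (2 * `|a| * p + 2 * q) ^+ 2 - (2 * `|a| ^+ 2 * p ^+ 2 + 2 * q ^+ 2) =
  2 * (`|a| * p) ^+ 2 + 8 * (`|a| * p * q) + 2 * q ^+ 2 by ring.
by rewrite !addr_ge0 ?mulr_ge0 ?sqr_ge0.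
Qed.


Lemma sq_sum_le (u v : R) : (u + v) ^+ 2 <= 2 * u ^+ 2 + 2 * v ^+ 2.
Proof.
rewrite -subr_ge0 (_ : _ - _ = (u - v) ^+ 2) ?sqr_ge0 //; ring.
Qed.

Lemma sq_mono (u v : R) : 0 <= u -> u <= v -> u ^+ 2 <= v ^+ 2.
Proof.
move=> u0 uv; rewrite ler_sqr ?nnegrE //.
exact: le_trans uv.
Qed.

Lemma Xterm_lin_le (a : R) (x y : Ecar R) n : Xspace x -> Xspace y ->
  Xterm (a *: x + y) n <= 8 * a ^+ 2 * Xterm x n + 8 * Xterm y n.
Proof.
case=> _ xf _ [_ yf _].
have cb : forall b j, cnorm (a *: x + y) n b j <=
    2 * `|a| * cnorm x n b j + 2 * cnorm y n b j.
  by move=> b j; apply: cn_lin_le.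
set Sz := \sum_(j < 2 * n) cnorm (a *: x + y) n false j.
set Sx := \sum_(j < 2 * n) cnorm x n false j.
set Sy := \sum_(j < 2 * n) cnorm y n false j.
set Mz := \big[Num.max/0]_(j < 2 * n) cnorm (a *: x + y) n true j.
set Mx := \big[Num.max/0]_(j < 2 * n) cnorm x n true j.
set My := \big[Num.max/0]_(j < 2 * n) cnorm y n true j.
have Sx0 : 0 <= Sx by apply: sumr_ge0 => j _; exact: cn_ge0.
have Sy0 : 0 <= Sy by apply: sumr_ge0 => j _; exact: cn_ge0.
have Sz0 : 0 <= Sz by apply: sumr_ge0 => j _; exact: cn_ge0.
have Mx0 : 0 <= Mx by apply: bigmax_ge0 => j; exact: cn_ge0.
have My0 : 0 <= My by apply: bigmax_ge0 => j; exact: cn_ge0.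
have Mz0 : 0 <= Mz by apply: bigmax_ge0 => j; exact: cn_ge0.
have hS : Sz <= 2 * `|a| * Sx + 2 * Sy.
  rewrite /Sz /Sx /Sy !mulr_sumr -big_split /=.
  by apply: ler_sum => j _; exact: cb.
have hM : Mz <= 2 * `|a| * Mx + 2 * My.
  apply: bigmax_le; first by rewrite addr_ge0 ?mulr_ge0.
  move=> j _; apply: le_trans (cb true j) _.
  rewrite /Mx /My; apply: lerD; apply: ler_wpM2l; rewrite ?mulr_ge0 //.
    exact: (le_bigmax 0 (fun j : 'I_(2 * n) => cnorm x n true j)).
  exact: (le_bigmax 0 (fun j : 'I_(2 * n) => cnorm y n true j)).
rewrite /Xterm -/Sz -/Sx -/Sy -/Mz -/Mx -/My.
apply: (@le_trans _ _ ((2 * `|a| * Sx + 2 * Sy) ^+ 2 + (2 * `|a| * Mx + 2 * My) ^+ 2)).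
  by apply: lerD; apply: sq_mono.
apply: le_trans (lerD (sq_sum_le _ _) (sq_sum_le _ _)) _.
rewrite !exprMn -(real_normK (num_real a)).
rewrite -subr_ge0 (_ : _ - _ = 0); first by [].
ring.
Qed.


Lemma Xspace_lin (a : R) (x y : Ecar R) : Xspace x -> Xspace y -> Xspace (a *: x + y).
Proof.
move=> Sx Sy; have [x0 xf xs] := Sx; have [y0 yf ys] := Sy; split.
- by move=> n b j k h; rewrite Ecar_lin x0 // y0 // mulr0 addr0.
- move=> n b j; apply: le_lt_trans (l2sq_lin_le a (x n b j) (y n b j)) _.
  have fu : l2sq (x n b j) \is a fin_num by rewrite fin_num_abs gee0_abs ?l2sq_ge0.
  have fw : l2sq (y n b j) \is a fin_num by rewrite fin_num_abs gee0_abs ?l2sq_ge0.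
  by rewrite -(fineK fu) -(fineK fw) -!EFinM -EFinD ltry.
- apply: (@le_lt_trans _ _ (\sum_(0 <= n <oo) ((8 * a ^+ 2)%:E * (Xterm x n)%:E + 8%:E * (Xterm y n)%:E))%E).
    apply: lee_nneseries; first by move=> n _ _; rewrite lee_fin Xterm_ge0.
    by move=> n _; rewrite -!EFinM -EFinD lee_fin Xterm_lin_le.
  rewrite nneseriesD; last first.
  - by move=> n _ _; rewrite -EFinM lee_fin mulr_ge0 ?Xterm_ge0.
  - by move=> n _ _; rewrite -EFinM lee_fin; apply: mulr_ge0; [apply: mulr_ge0|]; rewrite ?sqr_ge0 ?Xterm_ge0.
  rewrite !nneseriesZl; try by move=> n _; rewrite lee_fin Xterm_ge0.
  have fx := Xspace_sum_fin Sx; have fy := Xspace_sum_fin Sy.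
  by rewrite -(fineK fx) -(fineK fy) -!EFinM -EFinD ltry.
Qed.


Lemma term_le_sum (I : finType) (F : I -> R) j :
  (forall i, 0 <= F i) -> F j <= \sum_i F i.
Proof.
by move=> F0; rewrite (bigD1 j) //= lerDl sumr_ge0.
Qed.

Lemma Xterm_zero (w : Ecar R) n : (forall b j k, w n b j k = 0) -> Xterm w n = 0.
Proof.
move=> w0; rewrite /Xterm.
have cz : forall b j, cnorm w n b j = 0.
  move=> b j; rewrite cnorm_cn -cn0; congr cn; apply/funext => k; exact: w0.
rewrite big1; last by move=> j _; rewrite cz.
rewrite bigmax0; last by move=> j; rewrite cz.
by rewrite expr0n /= add0r.
Qed.

Lemma block_Xspace (w : Ecar R) n0 :
  (forall n b j k, n != n0 -> w n b j k = 0) ->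
  (forall n b j k, (2 * n <= j)%N -> w n b j k = 0) ->
  (forall n b j, (l2sq (w n b j) < +oo)%E) -> Xspace w.
Proof.
move=> w0 w1 w2; split => //.
rewrite (@eseries_single _ n0) ?ltry // ?lee_fin ?Xterm_ge0 //.
by move=> n nn0; rewrite Xterm_zero // => b j k; exact: w0.
Qed.

Lemma Bf_ext n0 mu nu : (forall j, (j < 2 * n0)%N -> mu j = nu j) ->
  Bf n0 mu = Bf n0 nu.
Proof.
move=> h; apply/funext => v; rewrite /Bf; case: asboolP => // _.
apply/funext => n; apply/funext => b; apply/funext => j; apply/funext => k.
by case: ifP => // /and3P[_ _ /h ->].
Qed.

Lemma Bf_sub n0 mu nu (v : Ecar R) :
  Bf n0 mu v - Bf n0 nu v = Bf n0 (fun j => mu j - nu j) v.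
Proof.
rewrite /Bf; case: asboolP => _; last by rewrite subr0.
apply/funext => n; apply/funext => b; apply/funext => j; apply/funext => k.
rewrite Ecar_sub.
by case: ifP => _; rewrite ?subr0 // mulrBl.
Qed.

Lemma Bf_bounded n0 mu : bounded_op (@Xspace R) (@Xnorm R) (Bf n0 mu).
Proof.
split.
- move=> x Sx; rewrite Bf_in //; apply: (@block_Xspace _ n0).
  + by move=> n b j k /negbTE ->.
  + move=> n b j k hj; case: ifP => // /and3P[/eqP en _ hj'].
    by move: hj; rewrite en leqNgt hj'.
  + move=> n b j /=; case: [&& n == n0, b & (j < 2 * n0)%N].
      rewrite l2sqZ; have [_ xf _] := Sx.
      have fu : l2sq (x n0 false j) \is a fin_num by rewrite fin_num_abs gee0_abs ?l2sq_ge0 ?xf.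
      by rewrite -(fineK fu) -EFinM ltry.
    by rewrite l2sq0 ltry.
- move=> a x y Sx Sy; rewrite !Bf_in //; last exact: Xspace_lin.
  apply/funext => n; apply/funext => b; apply/funext => j; apply/funext => k.
  rewrite Ecar_lin [RHS]Ecar_lin /=; case: ifP => _; last by rewrite mulr0 addr0.
  ring.
- exists (\sum_(j < 2 * n0) `|mu j|) => x Sx.
  rewrite XnormBf //; apply: bigmax_le.
    by rewrite mulr_ge0 ?sumr_ge0 // ?Xnorm_ge0 //; exact: sqrtr_ge0.
  move=> j _; apply: (@le_trans _ _ ((\sum_(j < 2 * n0) `|mu j|) * cnorm x n0 false j)).
    apply: ler_wpM2r; first exact: cn_ge0.
    have := @term_le_sum _ (fun j : 'I_(2 * n0) => `|mu j|) j. by apply => i.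
  apply: ler_wpM2l; first by rewrite sumr_ge0.
  apply: le_trans (sumc_le n0 Sx).
  have := @term_le_sum _ (fun j : 'I_(2 * n0) => cnorm x n0 false j) j.
  by apply => i; exact: cn_ge0.
- by move=> x Sx; rewrite Bf_out.
Qed.


Lemma Xspace0 : Xspace (0 : Ecar R).
Proof.
apply: (@block_Xspace _ 0) => // n b j; rewrite (_ : (0 : Ecar R) n b j = fun _ => 0) //.
by rewrite l2sq0 ltry.
Qed.

Lemma Xnorm0 : Xnorm (0 : Ecar R) = 0.
Proof.
rewrite (@Xnorm_block _ 0) // Xterm_zero ?sqrtr0 //.
Qed.

Lemma opdist_Bf n0 mu nu (d : R) : 0 <= d ->
  (forall j, (j < 2 * n0)%N -> `|mu j - nu j| <= d) ->
  opdist (@Xspace R) (@Xnorm R) (Bf n0 mu) (Bf n0 nu) <= d.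
Proof.
move=> d0 hd; apply: ge_sup.
  exists (Xnorm (Bf n0 mu 0 - Bf n0 nu 0)), 0 => //.
  by split; [exact: Xspace0 | rewrite Xnorm0].
move=> _ [x [Sx nx] <-]; rewrite Bf_sub XnormBf //.
apply: bigmax_le => // j _.
apply: (@le_trans _ _ (d * cnorm x n0 false j)).
  by apply: ler_wpM2r; [exact: cn_ge0 | exact: hd].
rewrite -[X in _ <= X]mulr1; apply: ler_wpM2l => //.
apply: le_trans nx; apply: le_trans (sumc_le n0 Sx).
have := @term_le_sum _ (fun j : 'I_(2 * n0) => cnorm x n0 false j) j.
by apply => i; exact: cn_ge0.
Qed.

End Lemmas.

Section Compact.
Variables (R : realType) (n0 : nat).

Local Notation Pt := 'rV[R]_(2 * n0).+1.
Definition muof (p : Pt) : nat -> R := fun j => p ord0 (inord j).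
Definition Kset : set Pt :=
  [set p | (forall i, 0 <= p ord0 i) /\ (forall i, p ord0 i <= 1) /\
           \sum_i p ord0 i <= n0%:R].
Definition Wset : set (Ecar R -> Ecar R) :=
  [set T | exists2 p, Kset p & T = Bf n0 (muof p)].

Lemma Kset_closed : closed Kset.
Proof.
have -> : Kset = (\bigcap_(i in [set: 'I_(2 * n0).+1])
      ((fun p : Pt => p ord0 i) @^-1` [set x : R | 0 <= x])) `&`
    ((\bigcap_(i in [set: 'I_(2 * n0).+1])
      ((fun p : Pt => p ord0 i) @^-1` [set x : R | x <= 1])) `&`
    ((fun p : Pt => \sum_i p ord0 i) @^-1` [set x : R | x <= n0%:R])).
  apply/seteqP; split => p /=.
    by move=> [h1 [h2 h3]]; split; [move=> i _; exact: h1|split => // i _; exact: h2].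
  by move=> [h1 [h2 h3]]; split; [move=> i; exact: h1|split => // i; exact: h2].
apply: closedI; [apply: closed_bigI => i _ | apply: closedI; [apply: closed_bigI => i _|]].
- by apply: (continuous_closedP _).1; [exact: coord_continuous | exact: closed_ge].
- by apply: (continuous_closedP _).1; [exact: coord_continuous | exact: closed_le].
- apply: (continuous_closedP _).1; last exact: closed_le.
  apply: continuous_big => //; first exact: add_continuous.
  by move=> i _; exact: coord_continuous.
Qed.

Lemma Kset_compact : compact Kset.
Proof.
apply: (@subclosed_compact _ _ [set v : 'rV[R]_(2 * n0).+1 | forall i, `[0, 1]%classic (v ord0 i)] Kset_closed).
  exact: (@rV_compact R _ (fun=> `[0, 1]%classic) (fun _ => @segment_compact R 0 1)).
by move=> p [h1 [h2 _]] i /=; rewrite in_itv /= h1 h2.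
Qed.


Lemma In_mem (T : eqType) (x : T) (s : seq T) : x \in s -> List.In x s.
Proof.
elim: s => //= a s IH; rewrite inE => /orP [/eqP ->|/IH]; [left|right] => //.
Qed.

Lemma Wset_compact : op_compact (@Xspace R) (@Xnorm R) Wset.
Proof.
split; first by move=> T [p _ ->]; exact: Bf_bounded.
move=> I U Uo cov.
pose O (i : {classic I}) : set Pt := [set p | U i (Bf n0 (muof p))].
have Oo : forall i, open (O i).
  move=> i; rewrite openE => p /= Op.
  have [r r0 hr] := Uo i _ (Bf_bounded n0 (muof p)) Op.
  rewrite /interior; apply/nbhs_ballP; exists (r / 2); first by rewrite /= divr_gt0.
  move=> q pq; rewrite /O /=; apply: hr; first exact: Bf_bounded.
  apply: le_lt_trans (@opdist_Bf _ n0 _ _ (r / 2) _ _) _.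
  - by rewrite divr_ge0 // ltW.
  - move=> j _; move: pq; rewrite /ball /= => -[_ /(_ ord0 (inord j))].
    rewrite /ball /= => /ltW; rewrite /muof.
    by [].
  - by rewrite ltr_pdivrMr // ltr_pMr // ltr1n.
have Kc := Kset_compact; rewrite compact_cover in Kc.
have cv : Kset `<=` cover setT O.
  move=> p Kp; have [i Ui] := cov (Bf n0 (muof p)) (ex_intro2 _ _ p Kp erefl).
  by exists i.
have [D' _ hD'] := Kc {classic I} setT O (fun i _ => Oo i) cv.
exists (finmap.enum_fset D') => _ [p Kp ->].
have [i Di Oi] := hD' p Kp.
exists i => //; apply: (@In_mem {classic I}); exact: Di.
Qed.


Lemma Ecar_comb (a c : R) (x y : Ecar R) n b j k :
  (a *: x + c *: y) n b j k = a * x n b j k + c * y n b j k.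
Proof. by []. Qed.

Lemma Wset_convex : op_convex Wset.
Proof.
move=> A B t [p [p0 [p1 ps]] ->] [q [q0 [q1 qs]] ->] /andP[t0 t1].
exists (t *: p + (1 - t) *: q).
  split; [|split].
  - move=> i; rewrite !mxE; have := p0 i; have := q0 i; nra.
  - move=> i; rewrite !mxE; have := p1 i; have := q1 i; have := p0 i; have := q0 i; nra.
  - rewrite (eq_bigr (fun i => t * p ord0 i + (1 - t) * q ord0 i)); last by move=> i _; rewrite !mxE.
    rewrite big_split /= -!mulr_sumr; nra.
apply/funext => x; rewrite /Bf; case: asboolP => Sx; last by rewrite !scaler0 addr0.
apply/funext => n; apply/funext => b; apply/funext => j; apply/funext => k.
rewrite Ecar_comb /=; case: ifP => _; last by rewrite !mulr0 addr0.
rewrite /muof !mxE; ring.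
Qed.

End Compact.

Lemma Ecar_scale (R : realType) (a : R) (x : Ecar R) n b j k :
  (a *: x) n b j k = a * x n b j k.
Proof. by []. Qed.

Lemma Ecar_sum (R : realType) (I : Type) (r : seq I) (P : pred I) (F : I -> Ecar R) n b j k :
  (\sum_(i <- r | P i) F i) n b j k = \sum_(i <- r | P i) F i n b j k.
Proof. by elim/big_rec2: _ => //= i y1 y2 _ <-. Qed.

Theorem proposition5p29 (R : realType) :
  ~ UALS (@Xspace R) (@Xnorm R).
Proof.
move=> [C [C0 H]].
set n0 := Num.bound (2 * C).
have hn0 : 2 * C < n0%:R by apply: archi_boundP; rewrite mulr_ge0 // ltW.
have N0 : 0 < n0%:R :> R by apply: le_lt_trans hn0; rewrite mulr_ge0 // ltW.
have n0pos : (0 < n0)%N by rewrite -(ltr0n R).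
set eps := n0%:R^-1 : R.
have eps0 : 0 < eps by rewrite invr_gt0.
have PW : forall x, Xspace x -> Xnorm x <= 1 ->
    exists2 B, Wset n0 B & Xnorm (Bf n0 (fun _ => 1) x - B x) <= eps.
  move=> x Sx nx.
  pose c j := cnorm x n0 false j.
  pose mu (i : nat) : R := if (i < 2 * n0)%N && (eps < c i) then 1 else 0.
  pose p : 'rV[R]_(2 * n0).+1 := \row_i mu i.
  have hmu : forall j : 'I_(2 * n0), muof p j = mu j.
    move=> j; rewrite /muof mxE inordK //; exact: ltnW (ltn_ord j).
  exists (Bf n0 (muof p)).
    exists p => //; split; [|split].
    - by move=> i; rewrite mxE /mu; case: ifP.
    - by move=> i; rewrite mxE /mu; case: ifP.
    - have hs : eps * \sum_i p ord0 i <= 1.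
        rewrite mulr_sumr big_ord_recr /= mxE /mu ltnn /= mulr0 addr0.
        apply: le_trans (le_trans _ (sumc_le n0 Sx)) nx.
        apply: ler_sum => i _; rewrite mxE /mu /= ltn_ord /=.
        case: ifP => [/ltW h|_]; rewrite ?mulr1 ?mulr0 //; exact: cn_ge0.
      have -> : \sum_i p ord0 i = n0%:R * (eps * \sum_i p ord0 i).
        by rewrite mulrA /eps divff ?mul1r // gt_eqF.
      by rewrite -[X in _ <= X]mulr1 ler_wpM2l // ltW.
  rewrite Bf_sub XnormBf //; apply: bigmax_le; first exact: ltW eps0.
  move=> j _; rewrite hmu /mu ltn_ord /=.
  case: ifP => h; first by rewrite subrr normr0 mul0r ltW.
  by rewrite subr0 normr1 mul1r leNgt h.
have [Y [B [Yc WB HY]]] := H (Wset n0) (@Wset_convex R n0) (@Wset_compact R n0)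
  (Bf n0 (fun _ => 1)) (Bf_bounded n0 _) eps eps0 PW.
have [p [p0 [p1 ps]] BE] := WB.
have [j0 hj0] : exists j0 : 'I_(2 * n0), muof p j0 <= 1 / 2.
  apply: contrapT => hne.
  have hw : forall i : 'I_(2 * n0), 1 / 2 < p ord0 (widen_ord (leqnSn _) i).
    move=> i; rewrite ltNge; apply/negP => hi; apply: hne; exists i.
    rewrite /muof (_ : inord i = widen_ord (leqnSn _) i) //.
    by apply: val_inj; rewrite /= inordK //; exact: ltnW (ltn_ord i).
  have : n0%:R < \sum_i p ord0 i.
    rewrite big_ord_recr /= -[n0%:R]addr0; apply: ltr_leD; last exact: p0.
    have -> : n0%:R = \sum_(i < 2 * n0) (1 / 2 : R).
      rewrite sumr_const card_ord -[RHS]mulr_natr natrM; lra.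
    apply: ltr_sum => //.
    have h2 : (0 < 2 * n0)%N by rewrite muln_gt0.
    by apply/hasP; exists (Ordinal h2) => //; exact: mem_index_enum.
  by rewrite ltNge ps.
have [YS Y0 Ylin _ [m [v [vS dec]]]] := Yc.
pose e (k : 'I_m.+1) : Ecar R := fun n b j k' =>
  if [&& n == n0, ~~ b & j == j0] && (k' == k) then 1 else 0.
have eS : forall k, Xspace (e k).
  move=> k; apply: (@block_Xspace R _ n0).
  - by move=> n b j k' /negbTE h; rewrite /e h.
  - move=> n b j k' hj; rewrite /e; case: ifP => // /andP[/and3P[/eqP en _ /eqP ej] _].
    by move: hj; rewrite en ej leqNgt ltn_ord.
  - move=> n b j; rewrite (@l2sq_fin R _ k.+1) ?ltry // => k' hk; rewrite /e.
    by case: ifP => // /andP[_ /eqP ek]; move: hk; rewrite ek ltnn.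
have hdec : forall k, exists yc : Ecar R * ('I_m -> R),
    Y yc.1 /\ e k = yc.1 + \sum_i yc.2 i *: v i.
  by move=> k; have [y [c [Yy ek]]] := dec _ (eS k); exists (y, c).
have [f hf] := boolp.choice hdec.
pose M : 'M[R]_(m.+1, m) := \matrix_(k, i) (f k).2 i.
have nrf : ~~ row_free M.
  apply/negP; rewrite /row_free => /eqP h; have := rank_leq_col M.
  by rewrite h ltnn.
have [r [k0 hk0]] : exists r k0, kermx M r k0 != 0.
  apply: contrapT => hn; move: nrf; rewrite -kermx_eq0 => /negP; apply.
  apply/eqP/matrixP => r1 k1; rewrite [RHS]mxE.
  by case: (eqVneq (kermx M r1 k1) 0) => // h; exfalso; apply: hn; exists r1, k1.
pose lam (k : 'I_m.+1) : R := kermx M r k.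
have orth : forall i, \sum_k lam k * (f k).2 i = 0.
  move=> i; move/matrixP: (mulmx_ker M) => /(_ r i); rewrite !mxE => h.
  rewrite -[RHS]h.
  apply: eq_bigr => k _; congr (_ * _); by rewrite mxE.
pose z := \sum_k lam k *: e k.
have zE : z = \sum_k lam k *: (f k).1.
  rewrite /z (eq_bigr (fun k => lam k *: (f k).1 + \sum_i (lam k * (f k).2 i) *: v i)); last first.
    move=> k _; rewrite (hf k).2 scalerDr scaler_sumr; congr (_ + _).
    by apply: eq_bigr => i _; rewrite scalerA.
  rewrite big_split /=.
  have -> : \sum_k \sum_i (lam k * (f k).2 i) *: v i = 0.
    rewrite exchange_big /=; apply: big1 => i _.
    by rewrite -scaler_suml orth scale0r.
  by rewrite addr0.
have Yz : Y z.
  rewrite zE; elim/big_ind: _ => //.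
    by move=> a b Ya Yb; rewrite -[a]scale1r; exact: Ylin.
  by move=> k _; have := Ylin (lam k) _ 0 (hf k).1 Y0; rewrite addr0.
have zval : forall n b j k', z n b j k' = if [&& n == n0, ~~ b & j == j0]
    then (if (k' < m.+1)%N then lam (inord k') else 0) else 0.
  move=> n b j k'; rewrite /z Ecar_sum.
  under eq_bigr => k _ do rewrite Ecar_scale.
  rewrite /e; case h : [&& n == n0, ~~ b & j == j0] => /=; last first.
    by apply: big1 => k _; rewrite mulr0.
  case: (ltnP k' m.+1) => hk.
    rewrite (bigD1 (Ordinal hk)) //= eqxx mulr1 big1 ?addr0.
      by congr lam; apply: val_inj; rewrite /= inordK.
    move=> k nk; case: eqP => [ek|_]; last by rewrite mulr0.
    by move: nk; rewrite (_ : k = Ordinal hk) ?eqxx //; apply: val_inj.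
  apply: big1 => k _; case: eqP => [ek|_]; last by rewrite mulr0.
  by move: (ltn_ord k); rewrite -ek ltnNge hk.
have zj0 : forall k', z n0 false j0 k' = if (k' < m.+1)%N then lam (inord k') else 0.
  by move=> k'; rewrite zval !eqxx.
set s := cnorm z n0 false j0.
have s0 : 0 < s.
  rewrite /s cnorm_cn /cn (@l2sq_fin R _ m.+1); last by move=> k hk; rewrite zj0 ltnNge hk.
  rewrite /= sqrtr_gt0.
  apply: (@lt_le_trans _ _ (lam k0 ^+ 2)); first by rewrite lt_def sqr_ge0 sqrf_eq0 hk0.
  have := @term_le_sum R _ (fun k : 'I_m.+1 => z n0 false j0 k ^+ 2) k0.
  rewrite zj0 ltn_ord inord_val; apply => k; exact: sqr_ge0.
pose y := s^-1 *: z.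
have Yy : Y y by have := Ylin s^-1 z 0 Yz Y0; rewrite addr0.
have Sy := YS _ Yy.
have cz : forall n b j, ~~ [&& n == n0, ~~ b & j == j0] -> cnorm z n b j = 0.
  move=> n b j h; rewrite cnorm_cn -cn0; congr cn; apply/funext => k.
  by rewrite zval (negbTE h).
have cy : forall n b j, cnorm y n b j = s^-1 * cnorm z n b j.
  move=> n b j; rewrite !cnorm_cn.
  transitivity (cn (fun k => s^-1 * z n b j k)) => //.
  by rewrite cnZ gtr0_norm ?invr_gt0.
have cy0 : cnorm y n0 false j0 = 1 by rewrite cy mulVf ?gt_eqF.
have ny : Xnorm y = 1.
  rewrite (@Xnorm_block R _ n0); last first.
    move=> n b j k hn; rewrite /y Ecar_scale zval.
    case: ifP => [/and3P[/eqP en _ _]|_]; last by rewrite mulr0.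
    by move: hn; rewrite en eqxx.
  rewrite /Xterm (bigD1 j0) //= cy0 big1; last first.
    by move=> j nj; rewrite cy cz ?mulr0 //= eqxx.
  rewrite bigmax0; last by move=> j; rewrite cy cz ?mulr0 //= andbF.
  by rewrite addr0 expr1n expr0n /= addr0 sqrtr1.
have := HY y Yy; rewrite ny lexx => /(_ isT).
rewrite BE Bf_sub XnormBf //.
apply/negP; rewrite -ltNge.
apply: (@lt_le_trans _ _ (1 / 2)).
  rewrite /eps ltr_pdivrMr //; lra.
apply: le_trans (le_bigmax 0 (fun j : 'I_(2 * n0) => `|1 - muof p j| * cnorm y n0 false j) j0).
rewrite /= cy0 mulr1 ger0_norm; lra.
Qed.
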